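(* Let $V$ be a homogeneous degree-$d$ divergence-free vector field on $\mathbf{C}^3$ not vanishing on $\mathbf{C}^3\setminus\{0\}$, with induced foliation $\mathcal{F}$ of $\mathbf{P}^2_{\mathbf{C}}$ and real field $W$. Let $p\in\mathbf{C}^3\setminus\{0\}$ with $p\cdot V(p)=0$, so that $b=\Pi(p)$ is a zero of $W$ on the regular part of $\mathcal{F}$. Then, for the restriction of $W$ to the leaf of $\mathcal{F}$ through $b$, the zero $b$: (1) is a sink if and only if $\|V(p)\|^2>|DV(V)(p)\cdot p|$; (2) is a saddle if and only if $\|V(p)\|^2<|DV(V)(p)\cdot p|$; (3) is never a source.
   Context: $\Pi:\mathbf{C}^3\setminus\{0\}\to\mathbf{P}^2_{\mathbf{C}}$ is the quotient map, $p\cdot p'=x\bar x'+y\bar y'+z\bar z'$ the standard Hermitian product, $\|\cdot\|$ its norm. Writing $V=\sum_{k\in\{x,y,z\}}V_k\,\partial_k$, $DV(V)$ is the vector field with components $DV(V)_k=\sum_{l\in\{x,y,z\}}V_l\,\partial V_k/\partial l$. The real field $W$ is the projection to $\mathbf{P}^2_{\mathbf{C}}$ of the real vector field $\mathrm{Re}(\tilde\rho V)$ with $\tilde\rho(p)=-2(p\cdot V(p))/\|p\|^{2d}$ (the leafwise gradient of $-\log\|p\|^2$ for the leafwise metric $\tilde g_p(V(p))=\|p\|^{2d-2}$). A zero is a sink (resp. source) if all eigenvalues of the linearization have negative (resp. positive) real part, and a saddle if the real parts are nonzero with some of opposite signs. *)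

(* Defs.v *)
From mathcomp Require Import all_boot all_order all_algebra.
From mathcomp Require Import all_classical all_reals all_analysis.
From mathcomp Require Import complex.
From mathcomp Require mpoly.

Set Implicit Arguments.
Unset Strict Implicit.
Unset Printing Implicit Defensive.

Import Order.TTheory GRing.Theory Num.Theory.
Local Open Scope ring_scope.

Section Defs.
Variable R : realType.
Local Notation C := (R[i]).

Definition rc (x : R) : C := Complex x 0.

Definition C3 := 'I_3 -> C.

Definition hdot (p p' : C3) : C := \sum_(k < 3) p k * Num.conj (p' k).

Definition nsq (p : C3) : C := hdot p p.

(* a polynomial vector field V = sum_k V_k d/dk on C^3 *)
Definition pvf := 'I_3 -> mpoly.mpoly 3 C.

Definition evf (V : pvf) (z : C3) : C3 := fun k => mpoly.meval z (V k).

(* homogeneous of degree d: every monomial in the support of each V_k has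
   total degree d (this is the unfolding of mpoly's  V k \is d.-homog ,
   whose notation cannot be Imported alongside mathcomp-analysis) *)
Definition homogeneous_vf (d : nat) (V : pvf) : Prop :=
  forall k, all [pred m | mpoly.mdeg m == d] (mpoly.msupp (V k)).

Definition divergence_free (V : pvf) : Prop :=
  \sum_(k < 3) mpoly.mderiv k (V k) = 0.

Definition nonvanishing_off0 (V : pvf) : Prop :=
  forall z : C3, ~ (forall k, z k = 0) -> ~ (forall k, evf V z k = 0).

Definition DVV (V : pvf) (z : C3) : C3 :=
  fun k => \sum_(l < 3) evf V z l * mpoly.meval z (mpoly.mderiv l (V k)).

Definition rho (d : nat) (V : pvf) (z : C3) : C :=
  - 2%:R * hdot z (evf V z) / (nsq z) ^+ d.

(* The real vector field Re(rho~ V) on C^3 \ {0}, identified (C^3 = R^6) with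
   the complex vector rho~(z) V(z). *)
Definition Xfield (d : nat) (V : pvf) (z : C3) : C3 :=
  fun k => rho d V z * evf V z k.

(* Affine chart of P^2 centred at b = Pi(p):  the point q of the complex plane
   p^perp = {q | q . p = 0} corresponds to Pi(p + q); its inverse is
   psi_p(z) = (||p||^2 / (z . p)) z - p.  The differential of the holomorphic
   map psi_p at z, applied to v, is  Dpsi_p(z)[v] below. *)
Definition Dpsi (p z v : C3) : C3 :=
  fun k => nsq p * (v k / hdot z p - z k * hdot v p / (hdot z p) ^+ 2).

(* W = Pi_*(Re(rho~ V)) read in the chart at b: at the chart point q it is
   Dpsi_p(p+q)[X(p+q)]. *)
Definition Wchart (d : nat) (V : pvf) (p q : C3) : C3 :=
  Dpsi p (p + q) (Xfield d V (p + q)).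

Definition cderive (f : R -> C) (s : R) : C :=
  Complex (derive1 (fun t => @complex.Re R (f t)) s) (derive1 (fun t => @complex.Im R (f t)) s).

Definition rscale (s : R) (w : C3) : C3 := fun k => rc s * w k.

(* linearization at the chart origin (i.e. at b) of W in the chart,
   applied to the (real) tangent vector w *)
Definition linW (d : nat) (V : pvf) (p w : C3) : C3 :=
  fun k => cderive (fun s => Wchart d V p (rscale s w) k) 0.

(* tangent vector at b of the leaf through b, in the chart: Pi_* V(p) *)
Definition leaf_tangent (V : pvf) (p : C3) : C3 := Dpsi p p (evf V p).

(* M (a real 2x2 matrix) is the matrix, in the real basis (v, i v) of the
   tangent plane T_b L = C v of the leaf L through b, of the linearization of
   the restriction of W to L at its zero b (= restriction of the linearization
   of W to the invariant plane T_b L). *)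
Definition leaf_linearization (d : nat) (V : pvf) (p : C3) (M : 'M[R]_2) : Prop :=
  let v := leaf_tangent V p in
  let iv := fun k => 'i * v k in
  (forall k, linW d V p v k = rc (M 0 0) * v k + rc (M 1 0) * iv k) /\
  (forall k, linW d V p iv k = rc (M 0 1) * v k + rc (M 1 1) * iv k).

Definition cmx (M : 'M[R]_2) : 'M[C]_2 := map_mx (rc) M.

Definition is_sink_mx (M : 'M[R]_2) : Prop :=
  forall l : C, eigenvalue (cmx M) l -> @complex.Re R l < 0.
Definition is_source_mx (M : 'M[R]_2) : Prop :=
  forall l : C, eigenvalue (cmx M) l -> 0 < @complex.Re R l.
Definition is_saddle_mx (M : 'M[R]_2) : Prop :=
  (forall l : C, eigenvalue (cmx M) l -> @complex.Re R l != 0) /\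
  (exists l : C, eigenvalue (cmx M) l /\ @complex.Re R l < 0) /\
  (exists l : C, eigenvalue (cmx M) l /\ 0 < @complex.Re R l).

Definition leaf_sink d V p : Prop :=
  exists M, leaf_linearization d V p M /\ is_sink_mx M.
Definition leaf_saddle d V p : Prop :=
  exists M, leaf_linearization d V p M /\ is_saddle_mx M.
Definition leaf_source d V p : Prop :=
  exists M, leaf_linearization d V p M /\ is_source_mx M.

End Defs.

(* Main.v *)
Require Import Defs.
From mathcomp Require Import all_boot all_order all_algebra.
From mathcomp Require Import all_classical all_reals all_analysis.
From mathcomp Require Import complex.
From mathcomp Require mpoly.
From mathcomp Require Import ring lra.
Import Order.TTheory GRing.Theory Num.Theory.
Import numFieldNormedType.Exports.
Import (canonicals, coercions) mpoly.
Set Implicit Arguments.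
Unset Strict Implicit.
Unset Printing Implicit Defensive.
Local Open Scope ring_scope.
Local Open Scope complex_scope.
Section S.
Variable R : realType.
Local Notation C := R[i].
Local Notation Rc := (@complex.Re R).
Local Notation Ic := (@complex.Im R).
Lemma ReD (x y : C) : Rc (x + y) = Rc x + Rc y.
Proof. by case: x => a b; case: y => c e. Qed.
Lemma ImD (x y : C) : Ic (x + y) = Ic x + Ic y.
Proof. by case: x => a b; case: y => c e. Qed.
Lemma ReM (x y : C) : Rc (x * y) = Rc x * Rc y - Ic x * Ic y.
Proof. by case: x => a b; case: y => c e. Qed.
Lemma ImM (x y : C) : Ic (x * y) = Rc x * Ic y + Ic x * Rc y.
Proof. by case: x => a b; case: y => c e. Qed.
Lemma ReJ (x : C) : Rc (Num.conj x) = Rc x.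
Proof. by case: x. Qed.
Lemma ImJ (x : C) : Ic (Num.conj x) = - Ic x.
Proof. by case: x. Qed.
Lemma ReV (x : C) : Rc (x^-1) = Rc x / (Rc x ^+ 2 + Ic x ^+ 2).
Proof. by case: x. Qed.
Lemma ImV (x : C) : Ic (x^-1) = - Ic x / (Rc x ^+ 2 + Ic x ^+ 2).
Proof. case: x => a b /=. by rewrite mulNr. Qed.

Definition CD (f : R -> C) (c : C) :=
  is_derive (0:R) (1:R) (fun s => Rc (f s)) (Rc c) /\
  is_derive (0:R) (1:R) (fun s => Ic (f s)) (Ic c).

Lemma CD_ext f g c : (forall s, f s = g s) -> CD f c -> CD g c.
Proof. by move=> e; have -> : f = g by apply/funext. Qed.

Lemma CD_cst a : CD (fun _ => a) 0.
Proof. split; exact: is_derive_cst. Qed.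

Lemma CD_add f g a b : CD f a -> CD g b -> CD (fun s => f s + g s) (a + b).
Proof.
move=> [fa1 fa2] [gb1 gb2]; split.
  have -> : (fun s => Rc (f s + g s)) = (fun s => Rc (f s)) + (fun s => Rc (g s)).
    by apply/funext => s; rewrite ReD.
  by rewrite ReD; exact: is_deriveD.
have -> : (fun s => Ic (f s + g s)) = (fun s => Ic (f s)) + (fun s => Ic (g s)).
  by apply/funext => s; rewrite ImD.
by rewrite ImD; exact: is_deriveD.
Qed.

Lemma CD_mul f g a b : CD f a -> CD g b ->
  CD (fun s => f s * g s) (a * g 0 + f 0 * b).
Proof.
move=> [fa1 fa2] [gb1 gb2]; split.
  have -> : (fun s => Rc (f s * g s)) =
    (fun s => Rc (f s)) * (fun s => Rc (g s)) - (fun s => Ic (f s)) * (fun s => Ic (g s)).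
    by apply/funext => s; rewrite ReM.
  apply: (is_derive_eq (is_deriveB (is_deriveM fa1 gb1) (is_deriveM fa2 gb2))).
  rewrite ReD !ReM /=. rewrite /GRing.scale /=. ring.
have -> : (fun s => Ic (f s * g s)) =
  (fun s => Rc (f s)) * (fun s => Ic (g s)) + (fun s => Ic (f s)) * (fun s => Rc (g s)).
  by apply/funext => s; rewrite ImM.
apply: (is_derive_eq (is_deriveD (is_deriveM fa1 gb2) (is_deriveM fa2 gb1))).
rewrite ImD !ImM /=. rewrite /GRing.scale /=. ring.
Qed.

Lemma CD_conj f a : CD f a -> CD (fun s => Num.conj (f s)) (Num.conj a).
Proof.
move=> [fa1 fa2]; split.
  have -> : (fun s => Rc (Num.conj (f s))) = (fun s => Rc (f s)).
    by apply/funext => s; rewrite ReJ.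
  by rewrite ReJ.
have -> : (fun s => Ic (Num.conj (f s))) = - (fun s => Ic (f s)).
  by apply/funext => s; rewrite ImJ.
by rewrite ImJ; exact: is_deriveN.
Qed.

Lemma CD_val f c c' : CD f c -> c = c' -> CD f c'.
Proof. by move=> h <-. Qed.

Lemma CD_opp f a : CD f a -> CD (fun s => - f s) (- a).
Proof.
move=> h; have := CD_mul (CD_cst (-1)) h; rewrite /= mul0r add0r mulN1r.
by apply: CD_ext => s; rewrite mulN1r.
Qed.

Lemma CD_sub f g a b : CD f a -> CD g b -> CD (fun s => f s - g s) (a - b).
Proof. by move=> h1 h2; apply: CD_add h1 (CD_opp h2). Qed.

Lemma CD_sum n (F : 'I_n -> R -> C) (a : 'I_n -> C) :
  (forall i, CD (F i) (a i)) -> CD (fun s => \sum_(i < n) F i s) (\sum_(i < n) a i).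
Proof.
elim: n F a => [|n IH] F a h.
  rewrite big_ord0; apply: CD_ext (CD_cst 0) => s; by rewrite big_ord0.
rewrite big_ord_recr /=.
apply: CD_ext (CD_add (IH (fun i => F (widen_ord (leqnSn n) i)) _ (fun i => h _)) (h ord_max)).
by move=> s; rewrite big_ord_recr.
Qed.


Lemma CD_lin (c : C) : CD (fun s => rc s * c) c.
Proof.
split.
  have -> : (fun s => Rc (rc s * c)) = id * cst (Rc c).
    by apply/funext => s /=; rewrite ReM /= mul0r subr0.
  apply: (is_derive_eq (is_deriveM (is_derive_id (0:R) (1:R)) (is_derive_cst _ (0:R) (1:R)))).
  rewrite /GRing.scale /=. ring.
have -> : (fun s => Ic (rc s * c)) = id * cst (Ic c).
  by apply/funext => s /=; rewrite ImM /= mul0r addr0.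
apply: (is_derive_eq (is_deriveM (is_derive_id (0:R) (1:R)) (is_derive_cst _ (0:R) (1:R)))).
rewrite /GRing.scale /=. ring.
Qed.


Definition CDa f := exists c, CD f c.

Lemma CD_CDa f c : CD f c -> CDa f.
Proof. by move=> h; exists c. Qed.

Lemma derivable_CDa f :
  derivable (fun s => Rc (f s)) (0:R) (1:R) -> derivable (fun s => Ic (f s)) (0:R) (1:R) -> CDa f.
Proof.
move=> h1 h2; exists (Complex ('D_1 (fun s => Rc (f s)) 0) ('D_1 (fun s => Ic (f s)) 0)).
by split; apply: derivableP.
Qed.

Lemma sq_neq0 (x : C) : x != 0 -> Rc x * Rc x + Ic x * Ic x != 0.
Proof.
case: x => a b /= h; apply: contra h => /eqP e.
have ha : 0 <= a * a by rewrite -expr2 sqr_ge0.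
have hb : 0 <= b * b by rewrite -expr2 sqr_ge0.
move/eqP: e; rewrite paddr_eq0 // !mulf_eq0 !orbb => /andP [/eqP -> /eqP ->].
by [].
Qed.

Lemma CDa_inv f : CDa f -> f 0 != 0 -> CDa (fun s => (f s)^-1).
Proof.
move=> [c [h1 h2]] nz.
pose u := (fun s => Rc (f s)); pose v := (fun s => Ic (f s)).
have du : derivable u 0 1 by case: h1.
have dv : derivable v 0 1 by case: h2.
have dq : derivable (u * u + v * v) 0 1.
  by apply: derivableD; apply: derivableM.
have qnz : (u * u + v * v) 0 != 0 by exact: sq_neq0.
have dqi := derivableV qnz dq.
apply: derivable_CDa.
  have -> : (fun s => Rc ((f s)^-1)) = u * (fun s => ((u * u + v * v) s)^-1).
    by apply/funext => s; rewrite ReV /= !expr2.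
  exact: derivableM.
have -> : (fun s => Ic ((f s)^-1)) = - (v * (fun s => ((u * u + v * v) s)^-1)).
  by apply/funext => s; rewrite ImV /= !expr2 mulNr.
apply: derivableN; exact: derivableM.
Qed.

Lemma CDa_add f g : CDa f -> CDa g -> CDa (fun s => f s + g s).
Proof. by move=> [a ha] [b hb]; exact: CD_CDa (CD_add ha hb). Qed.
Lemma CDa_sub f g : CDa f -> CDa g -> CDa (fun s => f s - g s).
Proof. by move=> [a ha] [b hb]; exact: CD_CDa (CD_sub ha hb). Qed.
Lemma CDa_mul f g : CDa f -> CDa g -> CDa (fun s => f s * g s).
Proof. by move=> [a ha] [b hb]; exact: CD_CDa (CD_mul ha hb). Qed.
Lemma CDa_cst a : CDa (fun _ => a).
Proof. exact: CD_CDa (CD_cst a). Qed.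
Lemma CDa_conj f : CDa f -> CDa (fun s => Num.conj (f s)).
Proof. by move=> [a ha]; exact: CD_CDa (CD_conj ha). Qed.
Lemma CDa_exp f n : CDa f -> CDa (fun s => f s ^+ n).
Proof.
move=> h; elim: n => [|n IH].
  by apply: CD_CDa (CD_ext _ (CD_cst 1)) => s; rewrite expr0.
have [c hc] := CDa_mul h IH; exists c; apply: CD_ext hc => s; by rewrite exprS.
Qed.
Lemma CDa_sum n (F : 'I_n -> R -> C) :
  (forall i, CDa (F i)) -> CDa (fun s => \sum_(i < n) F i s).
Proof.
move=> h; have /all_sig [a ha] : forall i, {c | CD (F i) c}.
  by move=> i; apply: cid; exact: h.
exact: CD_CDa (CD_sum ha).
Qed.

Definition Smp (P : mpoly.mpoly 3 C) := forall z w : C3 R,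
  CD (fun s => mpoly.meval (z + rscale s w) P)
     (\sum_(l < 3) w l * mpoly.meval z (mpoly.mderiv l P)).

Lemma zl0 (z w : C3 R) : z + rscale 0 w = z.
Proof. by apply/funext => k; change (z k + rc 0 * w k = z k); rewrite (_ : rc 0 = 0) // mul0r addr0. Qed.

Lemma Smp_add P Q : Smp P -> Smp Q -> Smp (P + Q).
Proof.
move=> hP hQ z w; have := CD_add (hP z w) (hQ z w).
rewrite -big_split /=; move/CD_ext => h.
apply: CD_val (h _ _) _; first by move=> s; rewrite mpoly.mevalD.
by apply: eq_bigr => l _; rewrite mpoly.mderivD mpoly.mevalD mulrDr.
Qed.

Lemma Smp_mul P Q : Smp P -> Smp Q -> Smp (P * Q).
Proof.
move=> hP hQ z w; have := CD_mul (hP z w) (hQ z w).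
rewrite !zl0 mulr_suml mulr_sumr -big_split /=; move/CD_ext => h.
apply: CD_val (h _ _) _; first by move=> s; rewrite mpoly.mevalM.
apply: eq_bigr => l _; rewrite mpoly.mderivM mpoly.mevalD !mpoly.mevalM; ring.
Qed.

Lemma Smp_scale c P : Smp P -> Smp (c *: P).
Proof.
move=> hP z w; have := CD_mul (CD_cst c) (hP z w).
rewrite mul0r add0r mulr_sumr /=; move/CD_ext => h.
apply: CD_val (h _ _) _; first by move=> s; rewrite mpoly.mevalZ.
apply: eq_bigr => l _; rewrite mpoly.mderivZ mpoly.mevalZ; ring.
Qed.

Lemma Smp_1 : Smp 1.
Proof.
move=> z w; apply: CD_val (CD_ext _ (CD_cst 1)) _.
  by move=> s; rewrite mpoly.meval1.
rewrite big1 // => l _; by rewrite -mpoly.mpolyC1 mpoly.mderivC mpoly.meval0 mulr0.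
Qed.

Lemma Smp_X (i : 'I_3) : Smp (mpoly.mpolyX _ (mpoly.mnm1 i)).
Proof.
move=> z w; apply: CD_val (CD_ext _ (CD_add (CD_cst (z i)) (CD_lin (w i)))) _.
  by move=> s; rewrite mpoly.mevalXU.
rewrite add0r (bigD1 i) //= big1 ?addr0.
  rewrite mpoly.mderivX mpoly.mevalZ mpoly.mevalX mpoly.mnm1E eqxx /= big1 ?mulr1 //.
  by move=> j _; rewrite mpoly.mnmBE !mpoly.mnm1E subnn expr0.
move=> l hl; rewrite mpoly.mderivX mpoly.mevalZ mpoly.mnm1E.
by rewrite eq_sym (negbTE hl) mul0r mulr0.
Qed.

Lemma Smp_all P : Smp P.
Proof.
elim/mpoly.mpolyind: P => [|c m P _ _ hP].
  move=> z w; apply: CD_val (CD_ext _ (CD_cst 0)) _.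
    by move=> s; rewrite mpoly.meval0.
  by rewrite big1 // => l _; rewrite mpoly.mderiv0 mpoly.meval0 mulr0.
apply: Smp_add hP; apply: Smp_scale.
rewrite mpoly.mpolyXE_id.
apply: (big_ind Smp Smp_1 Smp_mul) => j _.
elim: (m j) => [|k IH]; first by rewrite expr0; exact: Smp_1.
by rewrite exprS; apply: Smp_mul IH; exact: Smp_X.
Qed.


Lemma cderive_CD f c : CD f c -> cderive f 0 = c.
Proof.
move=> [h1 h2]; rewrite /cderive !derive1E !derive_val.
by case: (c) h1 h2.
Qed.

Lemma conjE (x : C) : Num.conj x = x^*%C.
Proof. by []. Qed.

Lemma hdotC (u v : C3 R) : hdot u v = Num.conj (hdot v u).
Proof.
rewrite /hdot conjE rmorph_sum; apply: eq_bigr => k _.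
by rewrite rmorphM /= !conjE conjcK mulrC.
Qed.

Variable d : nat.
Variable V : pvf R.
Variable p : C3 R.

Definition zs (w : C3 R) (s : R) : C3 R := p + rscale s w.

Lemma zsE w s k : zs w s k = p k + rc s * w k.
Proof. by []. Qed.

Definition Gk (k : 'I_3) (z : C3 R) : C :=
  - 2%:R / nsq z ^+ d * nsq p *
  (evf V z k / hdot z p - z k * hdot (evf V z) p / (hdot z p) ^+ 2).

Lemma hdotZl (c : C) (u v : C3 R) : hdot (fun k => c * u k) v = c * hdot u v.
Proof. by rewrite /hdot mulr_sumr; apply: eq_bigr => l _; rewrite mulrA. Qed.

Lemma Wchart_fact q k :
  Wchart d V p q k = hdot (p + q) (evf V (p + q)) * Gk k (p + q).
Proof.
rewrite /Wchart /Dpsi /Xfield hdotZl /rho /Gk.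
move: (p + q) => z.
ring.
Qed.

Lemma CD_z w k : CD (fun s => zs w s k) (w k).
Proof.
have h := CD_add (CD_cst (p k)) (CD_lin (w k)).
rewrite add0r in h; exact: CD_ext h.
Qed.

Definition aD (w : C3 R) : C :=
  \sum_(k < 3) (w k * Num.conj (evf V p k) +
     p k * Num.conj (\sum_(l < 3) w l * mpoly.meval p (mpoly.mderiv l (V k)))).

Lemma zs0 w : zs w 0 = p.
Proof. exact: zl0. Qed.

Lemma CD_a w : CD (fun s => hdot (zs w s) (evf V (zs w s))) (aD w).
Proof.
rewrite /hdot /aD; apply: CD_sum => k.
have := CD_mul (CD_z w k) (CD_conj (Smp_all (V k) p w)).
by rewrite /= ?zs0 ?zl0.
Qed.

Lemma CDa_z w k : CDa (fun s => zs w s k).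
Proof. exact: CD_CDa (CD_z w k). Qed.

Lemma CDa_ev w k : CDa (fun s => evf V (zs w s) k).
Proof. exact: CD_CDa (Smp_all (V k) p w). Qed.

Lemma CDa_hz w (u : C3 R) : CDa (fun s => hdot (zs w s) u).
Proof.
rewrite /hdot; apply: CDa_sum => l.
exact: CDa_mul (CDa_z w l) (CDa_cst _).
Qed.

Lemma CDa_hV w : CDa (fun s => hdot (evf V (zs w s)) p).
Proof.
rewrite /hdot; apply: CDa_sum => l.
exact: CDa_mul (CDa_ev w l) (CDa_cst _).
Qed.

Lemma CDa_nsq w : CDa (fun s => nsq (zs w s)).
Proof.
rewrite /nsq /hdot; apply: CDa_sum => l.
exact: CDa_mul (CDa_z w l) (CDa_conj (CDa_z w l)).
Qed.

Lemma CDa_G w k : nsq p != 0 -> CDa (fun s => Gk k (zs w s)).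
Proof.
move=> hp; rewrite /Gk.
apply: CDa_mul.
  apply: CDa_mul (CDa_cst _).
  apply: CDa_mul (CDa_cst _) _.
  apply: CDa_inv; first exact: CDa_exp (CDa_nsq w).
  by rewrite zs0 expf_neq0.
apply: CDa_sub.
  apply: CDa_mul (CDa_ev w k) _.
  by apply: CDa_inv; [exact: CDa_hz | rewrite zs0].
apply: CDa_mul.
  exact: CDa_mul (CDa_z w k) (CDa_hV w).
apply: CDa_inv; first exact: CDa_exp (CDa_hz w p).
by rewrite zs0 expf_neq0.
Qed.

Lemma linW_val w k : nsq p != 0 -> hdot p (evf V p) = 0 ->
  linW d V p w k = aD w * Gk k p.
Proof.
move=> hp hpV; rewrite /linW.
have [g hg] := CDa_G w k hp.
have h := CD_mul (CD_a w) hg.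
rewrite /= !zs0 hpV mul0r addr0 in h.
apply: cderive_CD; apply: CD_ext h => s.
by rewrite Wchart_fact.
Qed.

Lemma Gk_p k : nsq p != 0 -> hdot p (evf V p) = 0 ->
  Gk k p = - 2%:R / nsq p ^+ d * evf V p k.
Proof.
move=> hp hpV; rewrite /Gk [hdot (evf V p) p]hdotC hpV conjE conjc0 mulr0 mul0r subr0.
rewrite -/(nsq p); field; by rewrite ?expf_neq0 ?hp.
Qed.

Lemma leaf_tangentE : nsq p != 0 -> hdot p (evf V p) = 0 ->
  leaf_tangent V p = evf V p.
Proof.
move=> hp hpV; apply/funext => k.
rewrite /leaf_tangent /Dpsi [hdot (evf V p) p]hdotC hpV conjE conjc0 mulr0 mul0r subr0.
rewrite -/(nsq p); field; by rewrite ?expf_neq0 ?hp.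
Qed.

End S.

Section Eig.
Variable F : fieldType.

Lemma ord2P (i : 'I_2) : i = 0 \/ i = 1.
Proof. case: i => [[|[|n]] hi]; [left|right|by []]; exact/val_inj. Qed.

Lemma ord1P (i : 'I_1) : i = 0.
Proof. case: i => [[|n]] hi; [exact/val_inj|by []]. Qed.

Lemma mul_row2 (v : 'rV[F]_2) (g : 'M[F]_2) j :
  (v *m g) 0 j = v 0 0 * g 0 j + v 0 1 * g 1 j.
Proof.
rewrite mxE !big_ord_recl big_ord0 addr0.
have e1 : lift ord0 (ord0 : 'I_1) = 1 :> 'I_2 by apply/val_inj.
have e0 : (ord0 : 'I_2) = 0 by apply/val_inj.
by rewrite e1 e0.
Qed.

Definition r2 (x y : F) : 'rV[F]_2 := \row_(j < 2) (if j == 0 :> nat then x else y).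

Lemma r2_0 x y : r2 x y 0 0 = x. Proof. by rewrite mxE. Qed.
Lemma r2_1 x y : r2 x y 0 1 = y. Proof. by rewrite mxE. Qed.

Lemma r2_eq (v : 'rV[F]_2) : v = r2 (v 0 0) (v 0 1).
Proof.
apply/matrixP => i j; rewrite (ord1P i).
by case: (ord2P j) => ->; rewrite ?r2_0 ?r2_1.
Qed.

Lemma eig2 (g : 'M[F]_2) a :
  eigenvalue g a <-> (g 0 0 - a) * (g 1 1 - a) - g 0 1 * g 1 0 = 0.
Proof.
split.
  case/eigenvalueP => v hv vnz.
  have e0 : (v *m g) 0 0 = (a *: v) 0 0 by rewrite hv.
  have e1 : (v *m g) 0 1 = (a *: v) 0 1 by rewrite hv.
  rewrite !mul_row2 !mxE in e0 e1.
  set D := (_ * _ - _ * _).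
  have h0 : v 0 0 * D = 0.
    have -> : v 0 0 * D = (g 1 1 - a) * ((v 0 0 * g 0 0 + v 0 1 * g 1 0) - a * v 0 0)
       - g 1 0 * ((v 0 0 * g 0 1 + v 0 1 * g 1 1) - a * v 0 1) by rewrite /D; ring.
    by rewrite e0 e1 !subrr !mulr0 subrr.
  have h1 : v 0 1 * D = 0.
    have -> : v 0 1 * D = (g 0 0 - a) * ((v 0 0 * g 0 1 + v 0 1 * g 1 1) - a * v 0 1)
       - g 0 1 * ((v 0 0 * g 0 0 + v 0 1 * g 1 0) - a * v 0 0) by rewrite /D; ring.
    by rewrite e0 e1 !subrr !mulr0 subrr.
  move/eqP: h0; rewrite mulf_eq0 => /orP [/eqP v0|/eqP //].
  move/eqP: h1; rewrite mulf_eq0 => /orP [/eqP v1|/eqP //].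
  move: vnz; rewrite (r2_eq v) v0 v1.
  suff -> : r2 0 0 = 0 by rewrite eqxx.
  by apply/matrixP => i j; rewrite (ord1P i) !mxE; case: (j == 0 :> nat).
move=> hD; apply/eigenvalueP.
have key : forall x y : F, r2 x y != 0 ->
   x * (g 0 0 - a) + y * g 1 0 = 0 -> x * g 0 1 + y * (g 1 1 - a) = 0 ->
   exists2 v : 'rV_2, v *m g = a *: v & v != 0.
  move=> x y nz h0 h1; exists (r2 x y) => //.
  apply/matrixP => i j; rewrite (ord1P i) mul_row2 !mxE /=.
  case: (ord2P j) => -> /=.
    by apply/eqP; rewrite -subr_eq0 -h0; apply/eqP; ring.
  by apply/eqP; rewrite -subr_eq0 -h1; apply/eqP; ring.
have nzr : forall x y : F, (x != 0) || (y != 0) -> r2 x y != 0.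
  move=> x y /orP [] h; apply: contraNneq h => e.
    by rewrite -(r2_0 x y) e mxE.
  by rewrite -(r2_1 x y) e mxE.
move: key hD nzr.
move: (g 0 0) (g 0 1) (g 1 0) (g 1 1) => g00 g01 g10 g11 key hD nzr.
have [e10|ne10] := eqVneq g10 0; last first.
  apply: (key g10 (a - g00)); first by apply: nzr; rewrite ne10.
    by ring.
  have -> : g10 * g01 + (a - g00) * (g11 - a) = - ((g00 - a) * (g11 - a) - g01 * g10) by ring.
  by rewrite hD oppr0.
have [e00|ne00] := eqVneq (g00 - a) 0; last first.
  apply: (key g10 (a - g00)).
    by apply: nzr; rewrite orbC -oppr_eq0 opprB ne00.
    by ring.
  have -> : g10 * g01 + (a - g00) * (g11 - a) = - ((g00 - a) * (g11 - a) - g01 * g10) by ring.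
  by rewrite hD oppr0.
have [e01|ne01] := eqVneq g01 0.
  apply: (key 1 0); first by apply: nzr; rewrite oner_eq0.
    by rewrite e00 e10; ring.
  by rewrite e01; ring.
apply: (key (g11 - a) (- g01)); first by apply: nzr; rewrite oppr_eq0 ne01 orbT.
  by rewrite e00 e10; ring.
by ring.
Qed.

End Eig.

Section Fin.
Variable R : realType.
Local Notation C := R[i].
Local Notation Rc := (@complex.Re R).
Local Notation Ic := (@complex.Im R).

Lemma rcC (x : R) : rc x = x%:C.
Proof. by []. Qed.

Definition nr (u : C3 R) : R := \sum_(k < 3) (Rc (u k) ^+ 2 + Ic (u k) ^+ 2).

Lemma nsq_real u : nsq u = rc (nr u).
Proof.
rewrite /nsq /hdot /nr rcC rmorph_sum; apply: eq_bigr => k _.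
case: (u k) => a b; rewrite conjE /=.
by congr (Complex _ _); ring.
Qed.

Lemma exists_nz (u : C3 R) : ~ (forall k, u k = 0) -> exists k, u k != 0.
Proof.
move=> h; case: (boolp.pselect (exists k, u k != 0)) => // H; exfalso.
apply: h => k; apply/eqP/negPn/negP => hk; apply: H; by exists k.
Qed.

Lemma nr_gt0 u : (exists k, u k != 0) -> 0 < nr u.
Proof.
case=> k hk; rewrite /nr (bigD1 k) //=.
have t : 0 < Rc (u k) ^+ 2 + Ic (u k) ^+ 2.
  rewrite lt0r !expr2 sq_neq0 //=.
  by apply: addr_ge0; rewrite -expr2 sqr_ge0.
have s : 0 <= \sum_(i < 3 | i != k) (Rc (u i) ^+ 2 + Ic (u i) ^+ 2).
  by apply: sumr_ge0 => i _; apply: addr_ge0; rewrite sqr_ge0.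
lra.
Qed.

Lemma cplx_split x y (v : C) : rc x * v + rc y * ('i * v) = Complex x y * v.
Proof. by case: v => a b /=; congr (Complex _ _); ring. Qed.

Lemma Complex_eq (E : C) x y : E = Complex x y <-> x = Rc E /\ y = Ic E.
Proof. by case: E => a b; split => [[-> ->]|[-> ->]]. Qed.

Lemma quad (u v w x y : R) (l : C) : u + v = x + y -> u * v - w = x * y ->
  (rc u - l) * (rc v - l) - rc w = (l - rc x) * (l - rc y).
Proof.
move=> e1 e2; rewrite !rcC.
have -> : (u%:C - l) * (v%:C - l) - w%:C = l ^+ 2 - (u + v)%:C * l + (u * v - w)%:C.
  by rewrite rmorphD rmorphB rmorphM; ring.
rewrite e1 e2 rmorphD rmorphM; ring.
Qed.

Lemma E1_Re c0 a (B : C) : Rc (rc c0 * (rc a + Num.conj B)) = c0 * (a + Rc B).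
Proof. by case: B => x y; rewrite conjE /=; ring. Qed.
Lemma E1_Im c0 a (B : C) : Ic (rc c0 * (rc a + Num.conj B)) = - (c0 * Ic B).
Proof. by case: B => x y; rewrite conjE /=; ring. Qed.
Lemma E2_Re c0 a (B : C) : Rc (rc c0 * ('i * rc a - 'i * Num.conj B)) = - (c0 * Ic B).
Proof. by case: B => x y; rewrite conjE /=; ring. Qed.
Lemma E2_Im c0 a (B : C) : Ic (rc c0 * ('i * rc a - 'i * Num.conj B)) = c0 * (a - Rc B).
Proof. by case: B => x y; rewrite conjE /=; ring. Qed.

Lemma aD_v (V : pvf R) p :
  aD V p (evf V p) = nsq (evf V p) + Num.conj (hdot (DVV V p) p).
Proof.
rewrite /aD big_split /=; congr (_ + _).
rewrite [hdot (DVV V p) p]hdotC conjE conjcK /hdot.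
by apply: eq_bigr => k _; rewrite /DVV.
Qed.

Lemma conj_i : Num.conj ('i : C) = - 'i.
Proof. by rewrite conjE /=; congr (Complex _ _); rewrite oppr0. Qed.

Lemma iE : (Num.imaginary : C) = Complex 0 1.
Proof. by []. Qed.

Lemma conj_iM (x : C) : Num.conj ('i * x) = - ('i * Num.conj x).
Proof. by rewrite !conjE ?iE; case: x => a b /=; congr (Complex _ _); ring. Qed.

Lemma aD_iv (V : pvf R) p :
  aD V p (fun k => 'i * evf V p k) =
  'i * nsq (evf V p) - 'i * Num.conj (hdot (DVV V p) p).
Proof.
rewrite /aD big_split /= [hdot (DVV V p) p]hdotC conjE conjcK /nsq /hdot.
rewrite !mulr_sumr -sumrN; congr (_ + _); apply: eq_bigr => k _.
  by rewrite mulrA.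
have -> : \sum_(l < 3) 'i * evf V p l * mpoly.meval p (mpoly.mderiv l (V k)) =
  'i * DVV V p k by rewrite /DVV mulr_sumr; apply: eq_bigr => l _; rewrite mulrA.
by rewrite conj_iM; ring.
Qed.

End Fin.

Section Main.
Variable R : realType.
Local Notation C := R[i].
Local Notation Rc := (@complex.Re R).
Local Notation Ic := (@complex.Im R).

Lemma lin_formula d (V : pvf R) p w k (c0 : R) :
  nsq p != 0 -> hdot p (evf V p) = 0 ->
  - 2%:R / nsq p ^+ d = rc c0 ->
  linW d V p w k = (rc c0 * aD V p w) * evf V p k.
Proof.
move=> hp hpV hc; rewrite linW_val // Gk_p // hc; ring.
Qed.

Lemma LL d (V : pvf R) p (c0 : R) (M : 'M[R]_2) :
  nsq p != 0 -> hdot p (evf V p) = 0 -> (exists k, evf V p k != 0) ->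
  - 2%:R / nsq p ^+ d = rc c0 ->
  leaf_linearization d V p M <->
  (M 0 0 = Rc (rc c0 * aD V p (evf V p)) /\ M 1 0 = Ic (rc c0 * aD V p (evf V p)) /\
   M 0 1 = Rc (rc c0 * aD V p (fun k => 'i * evf V p k)) /\
   M 1 1 = Ic (rc c0 * aD V p (fun k => 'i * evf V p k))).
Proof.
move=> hp hpV [k0 hk0] hc.
rewrite /leaf_linearization leaf_tangentE //=.
split.
  case=> h1 h2.
  have := h1 k0; rewrite (@lin_formula d V p _ _ c0 hp hpV hc) cplx_split => /(mulIf hk0) /Complex_eq [-> ->].
  have := h2 k0; rewrite (@lin_formula d V p _ _ c0 hp hpV hc) cplx_split => /(mulIf hk0) /Complex_eq [-> ->].
  by [].
case=> e00 [e10 [e01 e11]]; split => k; rewrite (@lin_formula d V p _ _ c0 hp hpV hc) cplx_split.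
  by congr (_ * _); apply/Complex_eq.
by congr (_ * _); apply/Complex_eq.
Qed.

Lemma L1 (c0 a r : R) : c0 < 0 -> c0 * (a - r) < 0 -> r < a.
Proof. by move=> h1 h2; nra. Qed.
Lemma L2 (c0 a r : R) : c0 < 0 -> 0 < a -> 0 <= r -> c0 * (a + r) < 0.
Proof. by move=> h1 h2 h3; nra. Qed.
Lemma L3 (c0 a r : R) : c0 < 0 -> r < a -> c0 * (a - r) < 0.
Proof. by move=> h1 h2; nra. Qed.
Lemma L4 (c0 a r : R) : c0 < 0 -> 0 < c0 * (a - r) -> a < r.
Proof. by move=> h1 h2; nra. Qed.
Lemma L5 (c0 a r : R) : c0 < 0 -> a < r -> 0 < c0 * (a - r).
Proof. by move=> h1 h2; nra. Qed.

Lemma EIG (c0 a bx by' r : R) (M : 'M[R]_2) :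
  M 0 0 = c0 * (a + bx) -> M 1 0 = - (c0 * by') -> M 0 1 = - (c0 * by') ->
  M 1 1 = c0 * (a - bx) -> r ^+ 2 = bx ^+ 2 + by' ^+ 2 ->
  forall l, eigenvalue (cmx M) l <-> l = rc (c0 * (a + r)) \/ l = rc (c0 * (a - r)).
Proof.
move=> e00 e10 e01 e11 hr l; rewrite eig2 /cmx !mxE e00 e10 e01 e11.
have -> : rc (- (c0 * by')) * rc (- (c0 * by')) = rc (- (c0 * by') * - (c0 * by')).
  by rewrite !rcC rmorphM.
rewrite (@quad _ _ _ _ (c0 * (a + r)) (c0 * (a - r))); first last.
- have -> : c0 * (a + r) * (c0 * (a - r)) = c0 ^+ 2 * a ^+ 2 - c0 ^+ 2 * r ^+ 2 by ring.
  by rewrite hr; ring.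
- by ring.
split.
  by move/eqP; rewrite mulf_eq0 !subr_eq0 => /orP [/eqP ->|/eqP ->]; [left|right].
by case=> ->; rewrite subrr ?mul0r ?mulr0.
Qed.

End Main.

Local Close Scope complex_scope.
Unset Implicit Arguments.

Theorem mainTheorem13 (R : realType) (d : nat) (V : pvf R) (p : C3 R) :
  homogeneous_vf d V ->
  divergence_free V ->
  nonvanishing_off0 V ->
  ~ (forall k, p k = 0) ->
  hdot p (evf V p) = 0 ->
  (leaf_sink d V p <-> `|hdot (DVV V p) p| < nsq (evf V p)) /\
  (leaf_saddle d V p <-> nsq (evf V p) < `|hdot (DVV V p) p|) /\
  ~ leaf_source d V p.
Proof.
move=> _ _ hnv hp0 hpV.
have hVp := exists_nz (hnv p hp0).
have hpn := exists_nz hp0.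
have np_gt0 := nr_gt0 hpn.
have nspE := nsq_real p.
have hp : nsq p != 0 by rewrite nspE rcC fmorph_eq0 gt_eqF.
set c0 := - 2%:R / nr p ^+ d.
have hc0 : c0 < 0 by rewrite /c0 mulNr oppr_lt0 divr_gt0 // exprn_gt0.
have hc : - 2%:R / nsq p ^+ d = rc c0.
  by rewrite nspE /c0 !rcC rmorphM rmorphN rmorph_nat fmorphV rmorphXn.
set a := nr (evf V p).
have ha : 0 < a := nr_gt0 hVp.
have naE : nsq (evf V p) = rc a := nsq_real _.
set B := hdot (DVV V p) p.
set r := Num.sqrt (complex.Re B ^+ 2 + complex.Im B ^+ 2).
have hr : r ^+ 2 = complex.Re B ^+ 2 + complex.Im B ^+ 2.
  by rewrite sqr_sqrtr // addr_ge0 // sqr_ge0.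
have r0 : 0 <= r by exact: sqrtr_ge0.
have nB : `|B| = rc r by rewrite normc_def.
have LLc : forall M, leaf_linearization d V p M <->
   (M 0 0 = c0 * (a + complex.Re B) /\ M 1 0 = - (c0 * complex.Im B) /\
    M 0 1 = - (c0 * complex.Im B) /\ M 1 1 = c0 * (a - complex.Re B)).
  move=> M; rewrite (LL _ hp hpV hVp hc) aD_v aD_iv naE.
  by rewrite E1_Re E1_Im E2_Re E2_Im.
have EI : forall M, leaf_linearization d V p M -> forall l,
    eigenvalue (cmx M) l <-> l = rc (c0 * (a + r)) \/ l = rc (c0 * (a - r)).
  by move=> M /LLc [e1 [e2 [e3 e4]]]; exact: EIG e1 e2 e3 e4 hr.
pose M0 : 'M[R]_2 := \matrix_(i < 2, j < 2)
  (if i == 0 then (if j == 0 then c0 * (a + complex.Re B) else - (c0 * complex.Im B))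
   else (if j == 0 then - (c0 * complex.Im B) else c0 * (a - complex.Re B))).
have hM0 : leaf_linearization d V p M0.
  by apply/LLc; rewrite !mxE /=.
have ev1 : forall M, leaf_linearization d V p M -> eigenvalue (cmx M) (rc (c0 * (a + r))).
  by move=> M /EI h; apply/h; left.
have ev2 : forall M, leaf_linearization d V p M -> eigenvalue (cmx M) (rc (c0 * (a - r))).
  by move=> M /EI h; apply/h; right.
rewrite nB naE !rcC !ltcR.
have L2' := L2 hc0 ha r0.
split; [|split].
- split.
    by case=> M [hM hs]; have := hs _ (ev2 _ hM); rewrite /= => h; exact: L1 hc0 h.
  move=> hlt; exists M0; split => // l /(EI _ hM0) [->|->] //=; exact: L3.
- split.
    case=> M [hM [_ [_ [l' [hl' hpos]]]]].
    move: hpos; case/(EI _ hM): hl' => -> /= h; last exact: L4 hc0 h.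
    by move: (lt_trans h L2'); rewrite ltxx.
  move=> hlt; exists M0; split => //; split; [|split].
  + move=> l /(EI _ hM0) [->|->] /=; [apply: ltr0_neq0 | apply: lt0r_neq0] => //.
    exact: L5.
  + by exists (rc (c0 * (a + r))); split; [exact: ev1 | ].
  + by exists (rc (c0 * (a - r))); split; [exact: ev2 | exact: L5].
- case=> M [hM hs]; have := hs _ (ev1 _ hM); rewrite /= => h.
  by move: (lt_trans h L2'); rewrite ltxx.
Qed.
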